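(* Let $\mathcal G$ be a good pseudogroup on a compact metric space $X$, let $\mathcal G_1$ be a good generating set of $\mathcal G$ and $\mathcal G_2$ the corresponding compacted generating set. Then there exists $\rho>0$ such that every Borel probability measure $\mu$ on $X$ that is $(\mathcal G,\mathcal G_2)$-weakly expansive with constant $\rho$ (i.e. $\mu(\Phi^2_\rho(x))=0$ for $\mu$-a.e. $x\in X$) is $(\mathcal G,\mathcal G_1)$-expansive with constant $\rho/2$ (i.e. $\mu(\Phi^1_{\rho/2}(x))=0$ for every $x\in X$).
   Context: $(X,d)$ is a compact metric space. $\mathrm{Homeo}(X)$ is the set of homeomorphisms $g:D_g\to R_g$ between open subsets of $X$; compositions are taken on their natural domains, $D_{h\circ g}=g^{-1}(D_h)$ (possibly empty). A pseudogroup is a set $\mathcal G\subset\mathrm{Homeo}(X)$ containing $\mathrm{id}_X$, closed under composition, inversion and restriction to open subsets of the domain, and such that if $g\in\mathrm{Homeo}(X)$ and $D_g$ has an open cover $\mathcal U$ with $g|_U\in\mathcal G$ for all $U\in\mathcal U$, then $g\in\mathcal G$. For $\Gamma\subset\mathrm{Homeo}(X)$ with $\bigcup_{g\in\Gamma}(D_g\cup R_g)=X$, the pseudogroup generated by $\Gamma$ consists of all $g\in\mathrm{Homeo}(X)$ such that each $x\in D_g$ has a neighborhood $U_x\subset D_g$ with $g|_{U_x}=g_1^{e_1}\circ\cdots\circ g_k^{e_k}|_{U_x}$ for some $g_i\in\Gamma$, $e_i\in\{\pm1\}$; $\Gamma$ generates $\mathcal G$ if this pseudogroup equals $\mathcal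 G$. $\Gamma$ is symmetric if $\mathrm{id}_X\in\Gamma$ and $g^{-1}\in\Gamma$ for all $g\in\Gamma$. A finite symmetric generating set $\mathcal G_1$ of $\mathcal G$ is good if for each $g\in\mathcal G_1$ there is a compact $K_g\subset D_g$ such that $\mathcal G_2=\{g|_{\mathrm{int}(K_g)}: g\in\mathcal G_1\}$ still generates $\mathcal G$; $\mathcal G_2$ is called the compacted generating set, and $\mathcal G$ is good if it has a good generating set. For $i=1,2$ let $\mathcal G^i_n=\{h_1\circ\cdots\circ h_n: h_j\in\mathcal G_i\}$, $\mathcal G^{i,x}_n=\{g\in\mathcal G^i_n: x\in D_g\}$ and $\Phi^i_\delta(x)=\{y\in X: d(g(x),g(y))\le\delta\ \text{for all } n\in\mathbb N \text{ and all } g\in\mathcal G^{i,x}_n\cap\mathcal G^{i,y}_n\}$ (Bowen ball). *)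

(* Defs.v *)
From HB Require Import structures.
From mathcomp Require Import all_boot all_order all_algebra.
From mathcomp Require Import all_classical all_reals all_analysis.
From Stdlib Require List.
Set Implicit Arguments. Unset Strict Implicit. Unset Printing Implicit Defensive.
Import Order.TTheory GRing.Theory Num.Theory.
Local Open Scope classical_set_scope.
Local Open Scope ring_scope.

(* Partial maps X -> X: g x = None iff x is outside the domain D_g.
   This representation is canonical (no junk values outside the domain). *)
Definition pmapX (X : Type) := X -> option X.

Section Defs.
Context {R : realType} {X : Type} (d : X -> X -> R).

Definition is_metric : Prop :=
  (forall x y, 0 <= d x y) /\ (forall x y, d x y = 0 <-> x = y) /\
  (forall x y, d x y = d y x) /\ (forall x y z, d x z <= d x y + d y z).

Definition dball (x : X) (e : R) : set X := [set y | d x y < e].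
Definition dopen (U : set X) : Prop :=
  forall x, U x -> exists e : R, 0 < e /\ dball x e `<=` U.
Definition dinterior (K : set X) : set X :=
  [set x | exists U, dopen U /\ U x /\ U `<=` K].
Definition dcompact (K : set X) : Prop :=
  forall (I : Type) (F : I -> set X), (forall i, dopen (F i)) ->
    K `<=` \bigcup_(i in setT) F i ->
    exists J : set I, finite_set J /\ K `<=` \bigcup_(i in J) F i.

Definition pdom (g : pmapX X) : set X := [set x | g x <> None].
Definition pran (g : pmapX X) : set X := [set y | exists x, g x = Some y].

Definition pcomp (h g : pmapX X) : pmapX X :=
  fun x => match g x with Some y => h y | None => None end.
Definition pid : pmapX X := fun x => Some x.
Definition prestr (g : pmapX X) (U : set X) : pmapX X :=
  fun x => if `[< U x >] then g x else None.
(* inverse partial map (defined using choice; unique for injective g) *)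
Definition pinv (g : pmapX X) : pmapX X :=
  fun y => match pselect (exists x, g x = Some y) with
           | left H => Some (projT1 (cid H))
           | right _ => None
           end.

Definition pcont (g : pmapX X) : Prop :=
  forall x y, g x = Some y -> forall e : R, 0 < e ->
    exists2 del : R, 0 < del &
      forall x2 y2, d x x2 < del -> g x2 = Some y2 -> d y y2 < e.

Definition is_homeo (g : pmapX X) : Prop :=
  [/\ dopen (pdom g), dopen (pran g),
      (forall x1 x2 y, g x1 = Some y -> g x2 = Some y -> x1 = x2),
      pcont g & pcont (pinv g)].

Definition pseudogroup (G : set (pmapX X)) : Prop :=
  [/\ G `<=` is_homeo, G pid,
      (forall g h, G g -> G h -> G (pcomp h g)) /\
      (forall g, G g -> G (pinv g)),
      (forall g U, G g -> dopen U -> U `<=` pdom g -> G (prestr g U)) &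
      (forall g, is_homeo g -> forall UU : set (set X),
          (forall U, UU U -> dopen U) -> pdom g = \bigcup_(U in UU) U ->
          (forall U, UU U -> G (prestr g U)) -> G g)].

(* evaluation of a word g_1^{e_1} o ... o g_k^{e_k}; e_i = true means +1 *)
Definition peval (w : seq (pmapX X * bool)) : pmapX X :=
  foldr (fun p acc => pcomp (if p.2 then p.1 else pinv p.1) acc) pid w.

Definition generated (Gam : set (pmapX X)) : set (pmapX X) :=
  [set g | is_homeo g /\ forall x, pdom g x ->
     exists (U : set X) (w : seq (pmapX X * bool)),
       [/\ dopen U, U x, U `<=` pdom g, w <> [::] &
           List.Forall (fun p => Gam p.1) w /\
           forall y, U y -> g y = peval w y]].

Definition generates (Gam G : set (pmapX X)) : Prop :=
  [/\ Gam `<=` is_homeo,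
      (forall x, exists2 g, Gam g & pdom g x \/ pran g x) &
      generated Gam = G].

Definition symmetric (Gam : set (pmapX X)) : Prop :=
  Gam pid /\ forall g, Gam g -> Gam (pinv g).

Definition compacted (G1 : set (pmapX X)) (K : pmapX X -> set X) : set (pmapX X) :=
  [set prestr g (dinterior (K g)) | g in G1].

Definition good_gen (G G1 : set (pmapX X)) (K : pmapX X -> set X) : Prop :=
  [/\ finite_set G1, symmetric G1, generates G1 G,
      (forall g, G1 g -> dcompact (K g) /\ K g `<=` pdom g) &
      generates (compacted G1 K) G].

Definition pwords (Gam : set (pmapX X)) (n : nat) : set (pmapX X) :=
  [set g | exists hs : seq (pmapX X),
     [/\ size hs = n, List.Forall Gam hs & g = foldr pcomp pid hs]].

Definition bowen (Gam : set (pmapX X)) (del : R) (x : X) : set X :=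
  [set y | forall n : nat, (0 < n)%N -> forall g, pwords Gam n g ->
     pdom g x -> pdom g y -> forall gx gy, g x = Some gx -> g y = Some gy ->
     d gx gy <= del].

End Defs.

(* Main.v *)
Require Import Defs.
From HB Require Import structures.
From mathcomp Require Import all_boot all_order all_algebra.
From mathcomp Require Import all_classical all_reals all_analysis.
From mathcomp Require Import lra.
From Stdlib Require Import Classical.
Import Order.TTheory GRing.Theory Num.Theory.
Local Open Scope classical_set_scope.
Local Open Scope ring_scope.

Lemma nat_min (R : realType) (Q : nat -> R -> Prop) :
  (forall k e e', 0 < e' -> e' <= e -> Q k e -> Q k e') ->
  forall n, (forall k, (k < n)%N -> exists e, 0 < e /\ Q k e) ->
  exists e, 0 < e /\ forall k, (k < n)%N -> Q k e.
Proof.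
move=> Qm; elim=> [|n IH] H.
  by exists 1; split => // k.
have [e1 [e1p He1]] := IH (fun k kn => H k (ltnW kn)).
have [e2 [e2p He2]] := H n (ltnSn n).
exists (Order.min e1 e2); split; first by rewrite lt_min e1p e2p.
move=> k; rewrite ltnS leq_eqVlt => /orP[/eqP->|kn].
  apply: Qm He2; first by rewrite lt_min e1p e2p.
  by rewrite ge_min lexx orbT.
apply: Qm (He1 k kn); first by rewrite lt_min e1p e2p.
by rewrite ge_min lexx.
Qed.

Lemma fin_min (R : realType) (I : Type) (J : set I) (P : I -> R -> Prop) :
  finite_set J ->
  (forall i e e', 0 < e' -> e' <= e -> P i e -> P i e') ->
  (forall i, J i -> exists e, 0 < e /\ P i e) ->
  exists e, 0 < e /\ forall i, J i -> P i e.
Proof.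
move=> [n /card_esym /card_bijP [f [g fg gf]]] Pm HP.
pose Rel k i := exists H : k \in `I_n, val (f (exist _ k H)) = i.
have HH : forall k, (k < n)%N -> exists e, 0 < e /\ forall i, Rel k i -> P i e.
  move=> k kn.
  have kI : k \in `I_n by rewrite inE.
  pose i := val (f (exist _ k kI)).
  have Ji : J i by have := valP (f (exist _ k kI)); rewrite inE.
  have [e [ep He]] := HP i Ji.
  exists e; split => // i' [H <-].
  by rewrite (Prop_irrelevance H kI).
have [e [ep He]] := @nat_min R (fun k e => forall i, Rel k i -> P i e)
  (fun k e e' e'p le H i r => Pm i e e' e'p le (H i r)) n HH.
exists e; split => // i Ji.
have iJ : i \in J by rewrite inE.
have := gf (exist _ i iJ); move: (g (exist _ i iJ)) => k fk.
have kn : (val k < n)%N by have := valP k; rewrite inE.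
apply: (He _ kn); exists (valP k).
have -> : exist _ (val k) (valP k) = k.
  by apply: val_inj.
by rewrite fk.
Qed.

Lemma dball_open (R : realType) (X : Type) (d : X -> X -> R) (x : X) (e : R) :
  is_metric d -> dopen d (dball d x e).
Proof.
move=> [d0 [dxx [ds dt]]] y yb; rewrite /dball /= in yb.
exists (e - d x y); split; first by lra.
move=> z hz; rewrite /dball /= in hz *; have := dt x y z; lra.
Qed.

Lemma compact_margin (R : realType) (X : Type) (d : X -> X -> R) (K D : set X) :
  is_metric d -> dcompact d K -> dopen d D -> K `<=` D ->
  exists r, 0 < r /\ forall y x, K y -> d y x <= r -> D x.
Proof.
move=> hm hK hD KD.
have : forall y, exists e : R, 0 < e /\ (D y -> dball d y e `<=` D).
  move=> y; case: (classic (D y)) => Dy.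
    by have [e [ep he]] := hD y Dy; exists e; split.
  by exists 1; split.
case/choice => ef hef.
have hcov : K `<=` \bigcup_(i in setT)
    (fun i : {y : X | K y} => dball d (proj1_sig i) (ef (proj1_sig i) / 2)) i.
  move=> y Ky; exists (exist _ y Ky) => //=.
  have [ep _] := hef y; have [_ [dxx _]] := hm.
  by rewrite /dball /=; rewrite (proj2 (dxx y y) erefl); lra.
have [J [fJ cov]] := hK {y : X | K y}
  (fun i => dball d (proj1_sig i) (ef (proj1_sig i) / 2))
  (fun i => @dball_open _ _ d _ _ hm) hcov.
have hpos : forall i, J i -> exists e, 0 < e /\ e <= ef (proj1_sig i) / 2.
  move=> i _; exists (ef (proj1_sig i) / 2); split => //.
  by have [ep _] := hef (proj1_sig i); lra.
have [r [rp hr]] := @fin_min R _ J (fun i r => r <= ef (proj1_sig i) / 2) fJ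
  (fun i e e' _ le h => le_trans le h) hpos.
exists r; split => // y x Ky dyx.
have [[i Ki] Ji /= hi] := cov y Ky.
have [ep hb] := hef i.
apply: (hb (KD _ Ki)) => /=.
have := hr _ Ji; rewrite /=.
have [_ [_ [_ dt]]] := hm; have := dt i y x.
rewrite /dball /= in hi.
rewrite /dball /=; lra.
Qed.

Definition goodmap (R : realType) (X : Type) (d : X -> X -> R) (g : pmapX X) :=
  dopen d (pdom g) /\ pcont d g.
Arguments goodmap {R X} d g.

Lemma goodmap_pid {R : realType} {X : Type} (d : X -> X -> R) :
  goodmap d (@pid X).
Proof.
split.
  by move=> x _; exists 1; split => // y _; rewrite /pdom /pid.
move=> x y [<-] e ep; exists e => //.
by move=> x2 y2 h [<-].
Qed.

Lemma goodmap_pcomp {R : realType} {X : Type} (d : X -> X -> R) (h g : pmapX X) :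
  goodmap d h -> goodmap d g -> goodmap d (Defs.pcomp h g).
Proof.
move=> [hD hC] [gD gC]; split.
  move=> x; rewrite /pdom /Defs.pcomp /=.
  case E: (g x) => [y'|] // hy'.
  have [r [rp hr]] := hD y' hy'.
  have [del1 del1p hdel1] := gC x y' E r rp.
  have gx : pdom g x by rewrite /pdom /= E.
  have [del2 [del2p hdel2]] := gD x gx.
  exists (Order.min del1 del2); split; first by rewrite lt_min del1p del2p.
  move=> x2; rewrite /dball /= lt_min => /andP[l1 l2].
  have : pdom g x2 by apply: hdel2.
  rewrite /pdom /=; case E2: (g x2) => [y2|] // _.
  by apply: hr; rewrite /dball /=; apply: (hdel1 x2 y2 l1 E2).
move=> x y; rewrite /Defs.pcomp; case E: (g x) => [y'|] // hy e ep.
have [del1 del1p hdel1] := hC y' y hy e ep.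
have [del del_p hdel] := gC x y' E del1 del1p.
exists del => // x2 y2 dx2; case E2: (g x2) => [y2'|] // hy2.
exact: (hdel1 y2' y2 (hdel x2 y2' dx2 E2) hy2).
Qed.

Lemma goodmap_words {R : realType} {X : Type} (d : X -> X -> R) (Gam : set (pmapX X)) hs :
  Gam `<=` is_homeo d -> List.Forall Gam hs -> goodmap d (foldr Defs.pcomp pid hs).
Proof.
move=> sub; elim=> [|h hs' Gh _ IH] /=; first exact: goodmap_pid.
apply: goodmap_pcomp => //.
by have [? _ _ ? _] := sub h Gh; split.
Qed.

Lemma bowen_open (R : realType) (X : Type) (d : X -> X -> R) (Gam : set (pmapX X)) del x :
  is_metric d -> Gam `<=` is_homeo d -> dopen d (~` bowen d Gam del x).
Proof.
move=> [d0 [dxx [ds dt]]] sub y nb.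
have [n [n0 [g [pw [px [py [gx [gy [ex [ey lt]]]]]]]]]] :
  exists n, (0 < n)%N /\ exists g, pwords Gam n g /\ pdom g x /\ pdom g y /\
    exists gx gy, g x = Some gx /\ g y = Some gy /\ del < d gx gy.
  apply: NNPP => H; apply: nb => n n0 g pw px py gx gy ex ey.
  rewrite leNgt; apply/negP => lt; apply: H.
  by exists n; split => //; exists g; do 3 (split => //); exists gx, gy.
have [gD gC] : goodmap d g.
  by case: pw => hs [_ fa ->]; exact: (goodmap_words d _ _ sub fa).
have [del1 del1p hdel1] := gC y gy ey (d gx gy - del) (ltac:(lra)).
have [del2 [del2p hdel2]] := gD y py.
exists (Order.min del1 del2); split; first by rewrite lt_min del1p del2p.
move=> y2; rewrite /dball /= lt_min => /andP[l1 l2] b2.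
have py2 : pdom g y2 by apply: hdel2.
move: (py2); rewrite /pdom /=; case E2: (g y2) => [gy2|] // _.
have := b2 n n0 g pw px py2 gx gy2 ex E2.
have := hdel1 y2 gy2 l1 E2.
have := dt gx gy2 gy; rewrite (ds gy2 gy); lra.
Qed.

Lemma lift {R : realType} {X : Type} (d : X -> X -> R) (G1 : set (pmapX X))
  (K : pmapX X -> set X) (r : R) :
  (forall g, G1 g -> forall y x, K g y -> d y x <= r -> pdom g x) ->
  G1 pid -> (forall x y, d x y = d y x) -> 0 < r ->
  forall hs, List.Forall (compacted d G1 K) hs ->
  exists hs1, [/\ List.Forall G1 hs1, size hs1 = size hs &
    forall x y gy, bowen d G1 (r / 2) x y ->
      foldr Defs.pcomp pid hs y = Some gy ->
      foldr Defs.pcomp pid hs1 y = Some gy /\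
      exists gx, foldr Defs.pcomp pid hs1 x = Some gx].
Proof.
move=> hP G1id ds rp hs0; elim=> [|h hs Gh Fa IH].
  exists [::]; split => // x y gy _ /= ->; split => //; by exists x.
case: Gh => h1 G1h1 <-.
have [hs1 [F1 sz H]] := IH.
exists (h1 :: hs1); split => /=; [by constructor | by rewrite sz |].
move=> x y gy bxy; rewrite /Defs.pcomp.
case E: (foldr Defs.pcomp pid hs y) => [y'|] //.
rewrite /prestr; case: asboolP => // Uy' hy.
have [E1 [x' Ex']] := H x y y' bxy E.
rewrite E1 Ex'; split => //.
have pw : pwords G1 (size hs1).+1 (Defs.pcomp pid (foldr Defs.pcomp pid hs1)).
  by exists (pid :: hs1); split => //; constructor.
have ex : Defs.pcomp pid (foldr Defs.pcomp pid hs1) x = Some x'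
  by rewrite /Defs.pcomp Ex'.
have ey : Defs.pcomp pid (foldr Defs.pcomp pid hs1) y = Some y'
  by rewrite /Defs.pcomp E1.
have px : pdom (Defs.pcomp pid (foldr Defs.pcomp pid hs1)) x by rewrite /pdom /= ex.
have py : pdom (Defs.pcomp pid (foldr Defs.pcomp pid hs1)) y by rewrite /pdom /= ey.
have dxy := bxy (size hs1).+1 erefl _ pw px py x' y' ex ey.
have Ky' : K h1 y' by case: Uy' => U [_ [Uy UK]]; exact: UK.
have : pdom h1 x' by apply: (hP h1 G1h1 y' x' Ky'); rewrite ds; lra.
rewrite /pdom /=; case: (h1 x') => [gx|] // _; by exists gx.
Qed.

Theorem theoremA (R : realType) (d0 : measure_display) (X : measurableType d0)
  (dist : X -> X -> R)
  (hmetric : is_metric dist) (hcompact : dcompact dist setT)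
  (hborel : @measurable d0 X = <<s dopen dist >>)
  (G G1 : set (pmapX X)) (K : pmapX X -> set X)
  (hG : pseudogroup dist G) (hG1 : good_gen dist G G1 K) :
  exists rho : R, 0 < rho /\
    forall mu : probability X R,
      {ae mu, forall x, mu (bowen dist (compacted dist G1 K) rho x) = 0%E} ->
      forall x, mu (bowen dist G1 (rho / 2) x) = 0%E.
Proof.
have [d_ge0 [dxx [ds dt]]] := hmetric.
case: hG1 => finG1 [G1id _] [G1h _ _] KK [G2h _ _].
have hpos : forall g, G1 g -> exists e, 0 < e /\
    (forall y x, K g y -> dist y x <= e -> pdom g x).
  move=> g Gg; have [Kc KD] := KK g Gg; have [hD _ _ _ _] := G1h g Gg.
  exact: compact_margin hmetric Kc hD KD.
have [r [rp hr]] := @fin_min R _ G1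
  (fun g e => forall y x, K g y -> dist y x <= e -> pdom g x) finG1
  (fun g e e' _ le h y x Ky dyx => h y x Ky (le_trans dyx le)) hpos.
exists r; split => // mu hae x.
set B1 := bowen dist G1 (r / 2) x.
have incl : forall y, B1 y -> B1 `<=` bowen dist (compacted dist G1 K) r y.
  move=> y By z Bz n n0 g [hs [sz Fa ->]] py pz gy gz ey ez.
  have [hs1 [F1 sz1 H]] := @lift _ _ dist G1 K r hr G1id ds rp _ Fa.
  have [E1 [gx Ex]] := H x y gy By ey.
  have [E2 [gx' Ex']] := H x z gz Bz ez.
  rewrite Ex in Ex'; case: Ex' => Ex'; subst gx'.
  have pw : pwords G1 n (foldr Defs.pcomp pid hs1) by exists hs1; split => //; rewrite sz1.
  have px : pdom (foldr Defs.pcomp pid hs1) x by rewrite /pdom /= Ex.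
  have py1 : pdom (foldr Defs.pcomp pid hs1) y by rewrite /pdom /= E1.
  have pz1 : pdom (foldr Defs.pcomp pid hs1) z by rewrite /pdom /= E2.
  have h1 := By n n0 _ pw px py1 gx gy Ex E1.
  have h2 := Bz n n0 _ pw px pz1 gx gz Ex E2.
  have := dt gy gx gz; rewrite (ds gy gx); lra.
have mB : forall Gam del x0, Gam `<=` is_homeo dist ->
    measurable (bowen dist Gam del x0).
  move=> Gam del x0 sub; rewrite -[bowen _ _ _ _]setCK; apply: measurableC.
  rewrite hborel; apply: sub_gen_smallest; exact: bowen_open.
case: hae => N [mN N0 sub].
apply: le_anti; rewrite measure_ge0 andbT.
case: (classic (exists y, B1 y /\ ~ N y)) => [[y [By Ny]]|nN].
  have my : mu (bowen dist (compacted dist G1 K) r y) = 0%E.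
    by apply: NNPP => H; apply: Ny; apply: sub.
  rewrite -my; apply: le_measure; rewrite ?inE; [exact: mB | exact: mB | exact: incl].
rewrite -N0; apply: le_measure; rewrite ?inE //; first exact: mB.
move=> z Bz; apply: NNPP => Nz; apply: nN; by exists z.
Qed.
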